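(* Let $Q=\sum_{i\in I} E_{i,\sigma(i)}\in M_n$ be a subpermutation. Then a matrix $A=[a_{ij}]\in M_n$ lies in the coset $QU_n=\{QU: U\in U_n\}$ if and only if $A$ meets the following conditions: (1) $A$ and $Q$ have the same places of nonzero rows, namely the nonzero rows of $A$ are exactly those indexed by $I$; (2) $A$ and $Q$ have the same places and values of the first nonzero entry in each nonzero row; precisely, for each $i\in I$, $a_{i,\sigma(i)}=1$ is the first nonzero entry of the $i$th row of $A$.
   Context: Let $\mathbb{F}$ be a fixed field and $M_n$ the set of $n\times n$ matrices over $\mathbb{F}$. Let $U_n$ be the group of $n\times n$ unit upper triangular matrices (upper triangular with all diagonal entries equal to $1$) over $\mathbb{F}$. For $i,j\in[n]=\{1,\ldots,n\}$, $E_{i,j}$ denotes the $n\times n$ matrix with $1$ in the $(i,j)$ entry and $0$ elsewhere. A matrix $Q\in M_n$ is a subpermutation if each of its rows and columns has at most one nonzero entry, which equals $1$. Every subpermutation $Q\in M_n$ can be written as $Q=\sum_{i\in I} E_{i,\sigma(i)}$, where $I\subseteq[n]$ and $\sigma: I\to\sigma(I)\subseteq[n]$ is a bijection (with $Q=0$ if $I=\emptyset$). *)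

(* Defs.v *)
From mathcomp Require Import all_boot all_order all_algebra.
Set Implicit Arguments. Unset Strict Implicit. Unset Printing Implicit Defensive.
Import GRing.Theory.
Local Open Scope ring_scope.

Definition subperm_mx (F : fieldType) (n : nat) (I : {set 'I_n})
  (sigma : 'I_n -> 'I_n) : 'M[F]_n :=
  \sum_(i in I) delta_mx i (sigma i).

Definition unit_upper (F : fieldType) (n : nat) (U : 'M[F]_n) : Prop :=
  (forall i j : 'I_n, (j < i)%N -> U i j = 0) /\ (forall i : 'I_n, U i i = 1).

(* Main.v *)
Require Import Defs.
From mathcomp Require Import all_boot all_order all_algebra.
Set Implicit Arguments. Unset Strict Implicit. Unset Printing Implicit Defensive.
Import GRing.Theory.
Local Open Scope ring_scope.

Lemma subperm_entry (F : fieldType) (n : nat) (I : {set 'I_n})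
  (sigma : 'I_n -> 'I_n) (i k : 'I_n) :
  subperm_mx F I sigma i k = ((i \in I) && (k == sigma i))%:R.
Proof.
rewrite /subperm_mx summxE.
have [iI|niI] := boolP (i \in I).
  rewrite (bigD1 i) //= big1 ?addr0; first by rewrite mxE eqxx.
  by move=> i' /andP[_ ne]; rewrite mxE eq_sym (negbTE ne).
rewrite big1 // => i' i'I; rewrite mxE.
by case: eqP => // ei; rewrite ei i'I in niI.
Qed.

Lemma subperm_mul (F : fieldType) (n : nat) (I : {set 'I_n})
  (sigma : 'I_n -> 'I_n) (U : 'M[F]_n) (i j : 'I_n) :
  (subperm_mx F I sigma *m U) i j = if i \in I then U (sigma i) j else 0.
Proof.
rewrite mxE.
under eq_bigr => k _ do rewrite subperm_entry.
have [iI|niI] := boolP (i \in I).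
  rewrite (bigD1 (sigma i)) //= big1 ?addr0; first by rewrite eqxx mul1r.
  by move=> k ne; rewrite (negbTE ne) mul0r.
by rewrite big1 // => k _; rewrite mul0r.
Qed.

Theorem lemma2p4 (F : fieldType) (n : nat) (I : {set 'I_n})
  (sigma : 'I_n -> 'I_n) (sigma_inj : {in I &, injective sigma})
  (A : 'M[F]_n) :
  (exists U : 'M[F]_n, unit_upper U /\ A = subperm_mx F I sigma *m U) <->
  ((forall i : 'I_n, row i A != 0 <-> i \in I) /\
   (forall i : 'I_n, i \in I ->
      A i (sigma i) = 1 /\ (forall j : 'I_n, (j < sigma i)%N -> A i j = 0))).
Proof.
split.
  move=> [U [[Ulow Udiag] ->]]; split.
    move=> i; split.
      apply: contraNT => niI; apply/eqP/rowP => j.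
      by rewrite mxE subperm_mul (negbTE niI) mxE.
    move=> iI; apply/eqP => /rowP /(_ (sigma i)).
    rewrite mxE subperm_mul iI Udiag mxE; apply/eqP; exact: oner_neq0.
  move=> i iI; rewrite !subperm_mul iI; split => // j lt.
  by rewrite subperm_mul iI; apply: Ulow.
move=> [Hrow Hfirst].
pose U : 'M[F]_n := \matrix_(k, j) match [pick i in I | sigma i == k] with
   | Some i => A i j | None => (k == j)%:R end.
exists U; split.
  split.
    move=> k j lt; rewrite mxE; case: pickP => [i /andP[iI /eqP ek]|_].
      by apply: (proj2 (Hfirst i iI)); rewrite ek.
    by case: eqP lt => [->|//]; rewrite ltnn.
  move=> k; rewrite mxE; case: pickP => [i /andP[iI /eqP ek]|_].
    by rewrite -ek (proj1 (Hfirst i iI)).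
  by rewrite eqxx.
apply/matrixP => i j; rewrite subperm_mul.
have [iI|niI] := boolP (i \in I).
  rewrite mxE; case: pickP => [i' /andP[i'I /eqP ek]|H].
    by rewrite (sigma_inj _ _ i'I iI ek).
  by move: (H i); rewrite iI eqxx.
have : row i A = 0.
  by apply/eqP; apply: contraNT niI => nz; apply/(Hrow i).
by move/rowP/(_ j); rewrite !mxE.
Qed.
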